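(* Let $q$ be an odd prime power with $q\equiv2\pmod 3$, let $m,n$ be positive integers, let $\omega\in\mathbb{F}_{q^2}$ be an element of multiplicative order $3$, and let $\varepsilon\in\mathbb{F}_q^*\cup\{\pm\omega,\pm\omega^2\}$. Then $$f(x)=(x+x^q)^m+\varepsilon(x-\omega x^q)^n$$ is a permutation polynomial of $\mathbb{F}_{q^2}$ if and only if $\gcd(mn,q-1)=1$.
   Context: A polynomial is a permutation polynomial of $\mathbb{F}_{q^2}$ if the map it induces on $\mathbb{F}_{q^2}$ is bijective. *)

(* Defs.v *)
From mathcomp Require Import all_boot all_algebra all_field.
Set Implicit Arguments. Unset Strict Implicit. Unset Printing Implicit Defensive.
Import GRing.Theory.
Local Open Scope ring_scope.

Definition prime_power (q : nat) : Prop :=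
  exists p k : nat, prime p /\ (0 < k)%N /\ q = (p ^ k)%N.

Definition fmap35 (F : finFieldType) (q m n : nat) (w eps : F) (x : F) : F :=
  (x + x ^+ q) ^+ m + eps * (x - w * x ^+ q) ^+ n.

Definition is_permutation (F : finFieldType) (f : F -> F) : Prop := bijective f.

(* Main.v *)
Require Import Defs.
From mathcomp Require Import all_boot all_algebra all_field all_fingroup all_solvable.
From mathcomp Require Import ring zify.
Import GRing.Theory.
Local Open Scope ring_scope.
Set Implicit Arguments. Unset Strict Implicit.

Lemma frobD (F : finFieldType) (q : nat) :
  prime_power q -> #|F| = (q ^ 2)%N ->
  forall x y : F, (x + y) ^+ q = x ^+ q + y ^+ q.
Proof.
move=> [p [k [pp [k0 ->]]]] cF x y.
have cp : p \in [pchar F].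
  by apply: (@card_finPcharP F p (k * 2)); rewrite // cF expnM.
apply: exprDn_pchar.
by rewrite pnatX (eq_pnat _ (pcharf_eq cp)) pnat_id.
Qed.

Lemma frobB (F : finFieldType) (q : nat) :
  prime_power q -> #|F| = (q ^ 2)%N ->
  forall x y : F, (x - y) ^+ q = x ^+ q - y ^+ q.
Proof.
move=> pq cF x y; apply/eqP; rewrite eq_sym subr_eq -frobD //.
by rewrite subrK.
Qed.

Lemma frob2 (F : finFieldType) (q : nat) :
  #|F| = (q ^ 2)%N -> forall x : F, (x ^+ q) ^+ q = x.
Proof. by move=> cF x; rewrite -exprM mulnn -cF expf_card. Qed.

Lemma two_neq0 (F : finFieldType) (q : nat) :
  prime_power q -> odd q -> #|F| = (q ^ 2)%N -> (2%:R : F) != 0.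
Proof.
move=> [p [k [pp [k0 qe]]]] oq cF.
have cp : p \in [pchar F].
  by apply: (@card_finPcharP F p (k * 2)); rewrite // cF qe expnM.
rewrite -(dvdn_pcharf cp) dvdn_prime2 //; apply/eqP=> p2.
by move: oq; rewrite qe p2 -(prednK k0) expnS oddM.
Qed.

Lemma pow_line (F : finFieldType) (q e : nat) (c a b : F) :
  (1 < q)%N -> (0 < e)%N -> coprime e q.-1 -> c != 0 ->
  a ^+ q = c * a -> b ^+ q = c * b -> a ^+ e = b ^+ e -> a = b.
Proof.
move=> q1 e0 co c0 ha hb hab.
have key : forall (z : F), z ^+ q = c * z -> forall t, z ^+ (q.-1 * t + 1) = c ^+ t * z.
  move=> z hz; elim=> [|t IH]; first by rewrite muln0 add0n expr1 expr0 mul1r.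
  rewrite mulnSr addnAC exprD IH -mulrA -exprS prednK ?(ltnW q1) // hz.
  by rewrite exprSr mulrA.
have [t _ dv] := Bezoutr q.-1 e0.
move: dv; rewrite gcdnC (eqP co) => /dvdnP [s hs].
have hs' : (q.-1 * t + 1 = e * s)%N by rewrite addnC mulnC hs mulnC.
have ea : a ^+ (q.-1 * t + 1) = (a ^+ e) ^+ s by rewrite hs' exprM.
have eb : b ^+ (q.-1 * t + 1) = (b ^+ e) ^+ s by rewrite hs' exprM.
move: ea eb; rewrite !key // hab => ea eb.
by apply: (mulfI (expf_neq0 t c0)); rewrite ea eb.
Qed.

Lemma wq (F : finFieldType) (q : nat) (w : F) :
  (q %% 3 = 2)%N -> w ^+ 3 = 1 -> w ^+ q = w ^+ 2.
Proof.
move=> q3 w3; rewrite (divn_eq q 3) q3 exprD exprM.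
by rewrite exprAC w3 expr1n mul1r.
Qed.

Lemma fscale (F : finFieldType) (q m n : nat) (w eps z x : F) :
  z ^+ q = z ->
  fmap35 q m n w eps (z * x) =
  z ^+ m * (x + x ^+ q) ^+ m + eps * (z ^+ n * (x - w * x ^+ q) ^+ n).
Proof.
move=> hz; rewrite /fmap35 exprMn hz -!exprMn; congr (_ ^+ _ + eps * _ ^+ _); ring.
Qed.
Unset Implicit Arguments.

Theorem proposition3p5 (F : finFieldType) (q m n : nat) (w eps : F) :
  prime_power q -> odd q -> (q %% 3 = 2)%N ->
  #|F| = (q ^ 2)%N ->
  (0 < m)%N -> (0 < n)%N ->
  w ^+ 3 = 1 -> w != 1 ->
  (eps != 0 /\ eps ^+ q = eps) \/
    eps = w \/ eps = - w \/ eps = w ^+ 2 \/ eps = - w ^+ 2 ->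
  (is_permutation (fmap35 q m n w eps) <-> gcdn (m * n) q.-1 = 1%N).
Proof.
move=> pq oq q3 cF m0 n0 w3 w1 heps.
have q1 : (1 < q)%N.
  have [E0 E1] : q <> 0%N /\ q <> 1%N by split => E; move: q3; rewrite E.
  lia.
have q0 : (0 < q)%N by apply: ltnW.
have fD := frobD pq cF; have fB := frobB pq cF; have f2 := frob2 cF.
have two0 := two_neq0 pq oq cF.
have hwq := wq q3 w3.
have hw2q : (w ^+ 2) ^+ q = w by rewrite exprAC hwq -exprM (_ : 2 * 2 = 3 + 1)%N // exprD w3 mul1r expr1.
have w0 : w != 0 by apply: contra_eq_neq w3 => ->; rewrite expr0n eq_sym oner_neq0.
have w20 : w ^+ 2 != 0 by rewrite expf_neq0.
have hsum : 1 + w + w ^+ 2 = 0.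
  have : (w - 1) * (1 + w + w ^+ 2) = 0 by rewrite (_ : (w - 1) * (1 + w + w ^+ 2) = w ^+ 3 - 1); [rewrite w3 subrr | ring].
  by move/eqP; rewrite mulf_eq0 subr_eq0 (negbTE w1) => /eqP.
have fN : forall x : F, (- x) ^+ q = - x ^+ q by move=> x; rewrite -sub0r fB expr0n eqn0Ngt q0 sub0r.
pose U (x : F) := x + x ^+ q.
pose V (x : F) := x - w * x ^+ q.
have hU : forall x, U x ^+ q = 1 * U x by move=> x; rewrite /U fD f2 addrC mul1r.
have hV : forall x, V x ^+ q = - w ^+ 2 * V x.
  move=> x; rewrite /V fB exprMn hwq f2.
  have -> : - w ^+ 2 * (x - w * x ^+ q) = x ^+ q * w ^+ 3 - w ^+ 2 * x by ring.
  by rewrite w3 mulr1.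
split.
-
  move=> /bij_inj finj; apply/eqP; apply/negPn/negP => g1.
  set g := gcdn (m * n) q.-1 in g1.
  have g0 : (0 < g)%N by rewrite gcdn_gt0 muln_gt0 m0 n0.
  have gg1 : (1 < g)%N by lia.
  set r := pdiv g.
  have pr : prime r by apply: pdiv_prime.
  have rmn : (r %| m * n)%N by apply: dvdn_trans (pdiv_dvd g) (dvdn_gcdl _ _).
  have rq : (r %| q.-1)%N by apply: dvdn_trans (pdiv_dvd g) (dvdn_gcdr _ _).
  have rG : (r %| #|[set: {unit F}]|)%N.
    rewrite card_finField_unit cF; apply: dvdn_trans rq _.
    apply/dvdnP; exists q.+1; rewrite -mulnn; lia.
  have [xu _ oxu] := Cauchy pr rG.
  set z := val xu.
  have zr : z ^+ r = 1 by rewrite /z -FinRing.val_unitX -oxu expg_order.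
  have z1 : z != 1.
    apply/eqP => z1; have : xu = 1%g by apply: val_inj; rewrite FinRing.val_unit1.
    by move=> e; move: oxu; rewrite e order1 => r1; move: pr; rewrite -r1.
  have zq : z ^+ q = z.
    have [j hj] := dvdnP rq.
    by rewrite -(prednK q0) exprS hj exprM exprAC zr expr1n mulr1.
  have : (r %| m)%N || (r %| n)%N by rewrite -Euclid_dvdM.
  case/orP => [/dvdnP [j hj] | /dvdnP [j hj]].
  + have zm : z ^+ m = 1 by rewrite hj exprM exprAC zr expr1n.
    have V0 : V (w ^+ 2) = 0 by rewrite /V hw2q -expr2 subrr.
    have : fmap35 q m n w eps (z * w ^+ 2) = fmap35 q m n w eps (w ^+ 2).
      by rewrite fscale // zm mul1r -/(U _) -/(V _) V0 /fmap35 -/(U _) -/(V _) V0 expr0n eqn0Ngt n0 !mulr0.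
    move/finj => e; move/eqP: z1; apply; apply: (mulIf w20); by rewrite mul1r.
  + have zn : z ^+ n = 1 by rewrite hj exprM exprAC zr expr1n.
    have U0 : U (w - w ^+ 2) = 0 by rewrite /U fB hwq hw2q; ring.
    have : fmap35 q m n w eps (z * (w - w ^+ 2)) = fmap35 q m n w eps (w - w ^+ 2).
      by rewrite fscale // zn mul1r -/(U _) -/(V _) U0 /fmap35 -/(U _) -/(V _) U0 expr0n eqn0Ngt m0 !mulr0.
    have x00 : w - w ^+ 2 != 0.
      rewrite (_ : w - w ^+ 2 = w * (1 - w)); last by ring.
      by rewrite mulf_neq0 // subr_eq0 eq_sym.
    move/finj => e; move/eqP: z1; apply; apply: (mulIf x00); by rewrite mul1r.
-
  move=> /eqP g1; apply: injF_bij.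
  have := g1; rewrite -/(coprime _ _) coprimeMl => /andP [cm cn].
  have on : odd n.
    apply/negPn/negP => en.
    have : (2 %| gcdn n q.-1)%N.
      rewrite dvdn_gcd dvdn2 en dvdn2 /=.
      by move: oq; rewrite -(prednK q0) /=; case: (odd q.-1).
    by rewrite (eqP cn).
  have w4 : w ^+ 2 * w ^+ 2 = w by rewrite -exprD (_ : (2 + 2 = 3 + 1)%N) // exprD w3 mul1r expr1.
  have w23 : (w ^+ 2) ^+ 3 = 1 by rewrite exprAC w3 expr1n.
  have [d [d3 [ed e0]]] : exists d : F, d ^+ 3 = 1 /\ eps ^+ q = d * eps /\ eps != 0.
    case: heps => [[e0 eq] | [-> | [-> | [-> | ->]]]].
    + by exists 1; rewrite expr1n mul1r.
    + by exists w; rewrite hwq expr2.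
    + by exists w; rewrite fN hwq expr2 mulrN oppr_eq0.
    + by exists (w ^+ 2); rewrite hw2q w4 w23.
    + by exists (w ^+ 2); rewrite fN hw2q mulrN w4 w23 oppr_eq0.
  have c0 : - w ^+ 2 != 0 by rewrite oppr_eq0.
  move=> x y /eqP hxy.
  set A := U x ^+ m - U y ^+ m.
  set B := V y ^+ n - V x ^+ n.
  have hAB : A = eps * B.
    apply/eqP; rewrite -subr_eq0; move: hxy; rewrite -subr_eq0 /fmap35 -/(U x) -/(U y) -/(V x) -/(V y).
    by move/eqP => h; rewrite -h /A /B; apply/eqP; ring.
  have hA : A ^+ q = A by rewrite /A fB -!exprM !(mulnC m) !exprM !hU !mul1r.
  have hB : B ^+ q = (- w ^+ 2) ^+ n * B.
    by rewrite /B fB -!exprM !(mulnC n) !exprM !hV !exprMn mulrBr.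
  have hne : d * (- w ^+ 2) ^+ n != 1.
    rewrite exprNn -signr_odd on expr1 mulrCA mulN1r.
    set zz := d * (w ^+ 2) ^+ n.
    have zz3 : zz ^+ 3 = 1 by rewrite /zz exprMn d3 mul1r -!exprM mulnC (mulnC 2%N) !exprM w3 !expr1n.
    apply/eqP => hz.
    have : zz = - 1 by rewrite -hz opprK.
    move=> e; move: zz3; rewrite e -signr_odd /= expr1 => /eqP.
    rewrite eq_sym -addr_eq0 => h.
    by move: two0; rewrite (_ : 2%:R = 1 + 1 :> F) ?h // mulr2n.
  have A0 : A = 0.
    have : A ^+ q = d * (- w ^+ 2) ^+ n * A by rewrite hAB exprMn ed hB; ring.
    rewrite hA => /eqP; rewrite -subr_eq0 -{1}(mul1r A) -mulrBl mulf_eq0 subr_eq0 eq_sym (negbTE hne) /=.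
    by move/eqP.
  have B0 : B = 0 by apply/eqP; move: A0; rewrite hAB => /eqP; rewrite mulf_eq0 (negbTE e0).
  have eU : U x = U y.
    apply: (pow_line q1 m0 cm (oner_neq0 F) (hU x) (hU y)).
    by apply/eqP; rewrite -subr_eq0; apply/eqP.
  have eV : V x = V y.
    apply: (pow_line q1 n0 cn c0 (hV x) (hV y)).
    by apply/eqP; rewrite eq_sym -subr_eq0; apply/eqP.
  have w10 : 1 + w != 0.
    by rewrite (_ : 1 + w = - w ^+ 2) ?oppr_eq0 //; apply/eqP; rewrite -subr_eq0 opprK hsum.
  have exq : x ^+ q = y ^+ q.
    have h : forall t, (1 + w) * t ^+ q = U t - V t by move=> t; rewrite /U /V; ring.
    by apply: (mulfI w10); rewrite !h eU eV.
  by move: eU; rewrite /U exq => /addIr.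
Qed.
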